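(* For every nonzero function $f:\mathbb{F}_2^n\to\mathbb{C}$ and every Lagrangian subspace $L\le\mathbb{F}_2^{2n}$, $$P_f(L)\le\max_{\phi:\ \mathcal{L}(\phi)=L}\Big(\frac{|\langle f,\phi\rangle|}{\|f\|_2}\Big)^2,$$ the maximum being over stabilizer states $\phi$ with $\mathcal{L}(\phi)=L$.
   Context: $\langle f,g\rangle=\mathbb{E}_xf(x)\overline{g(x)}$, $\|f\|_2=\langle f,f\rangle^{1/2}$, $\Delta_af(x)=f(x+a)\overline{f(x)}$, $\hat g(b)=\mathbb{E}_xg(x)(-1)^{b\cdot x}$, $\|f\|_{U^3}=(\mathbb{E}_{x,a,b,c}\Delta_a\Delta_b\Delta_cf(x))^{1/8}$. A Lagrangian subspace of $\mathbb{F}_2^{2n}$ is a maximal isotropic subspace for $[(a,b),(c,d)]=a\cdot d+b\cdot c$. A stabilizer state is $\phi$ with $\|\phi\|_2=\|\phi\|_{U^3}=1$; $\mathcal{L}(\phi)$ is the unique Lagrangian with $|\widehat{\Delta_a\phi}(b)|=\mathbf{1}_{\mathcal{L}(\phi)}(a,b)$. $P_f(a,b)=|\widehat{\Delta_af}(b)|^2/(2^n\|f\|_2^4)$ and $P_f(L)=\sum_{(a,b)\in L}P_f(a,b)$. *)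

(* Defs.v *)
From HB Require Import structures.
From mathcomp Require Import all_boot all_order all_algebra.
From mathcomp Require Import complex.
From mathcomp Require Import reals.
Set Implicit Arguments. Unset Strict Implicit. Unset Printing Implicit Defensive.
Import Order.TTheory GRing.Theory Num.Theory.
Local Open Scope ring_scope.

Section Defs.
Variables (R : realType) (n : nat).
Local Notation C := R[i].
Definition vec := 'rV['F_2]_n.

Definition dot (b x : vec) : 'F_2 := \sum_(i < n) b 0 i * x 0 i.
Definition chr (b x : vec) : C := if dot b x == 0 then 1 else -1.

Definition avg (g : vec -> C) : C := (#|{: vec}|%:R)^-1 * \sum_(x : vec) g x.

Definition inner (f g : vec -> C) : C := avg (fun x => f x * Num.conj (g x)).
Definition norm2 (f : vec -> C) : C := sqrtC (inner f f).
Definition Delta (a : vec) (f : vec -> C) : vec -> C :=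
  fun x => f (x + a) * Num.conj (f x).
Definition fhat (g : vec -> C) (b : vec) : C := avg (fun x => g x * chr b x).
Definition U3 (f : vec -> C) : C :=
  8.-root (avg (fun x => avg (fun a => avg (fun b => avg (fun c =>
    Delta a (Delta b (Delta c f)) x))))).

(* F_2^{2n} = F_2^n x F_2^n, symplectic form [(a,b),(c,d)] = a.d + b.c *)
Definition sympl (u v : vec * vec) : 'F_2 := dot u.1 v.2 + dot u.2 v.1.
Definition subspace (L : {set vec * vec}) : Prop :=
  (0, 0) \in L /\ forall u v, u \in L -> v \in L -> (u.1 + v.1, u.2 + v.2) \in L.
Definition isotropic (L : {set vec * vec}) : Prop :=
  forall u v, u \in L -> v \in L -> sympl u v = 0.
Definition lagrangian (L : {set vec * vec}) : Prop :=
  subspace L /\ isotropic L /\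
  forall M : {set vec * vec}, subspace M -> isotropic M -> L \subset M -> M = L.

Definition stabilizer_state (phi : vec -> C) : Prop :=
  norm2 phi = 1 /\ U3 phi = 1.
Definition LagOf (phi : vec -> C) (L : {set vec * vec}) : Prop :=
  forall a b : vec, `|fhat (Delta a phi) b| = (if (a, b) \in L then 1 else 0).

Definition Pf (f : vec -> C) (a b : vec) : C :=
  `|fhat (Delta a f) b| ^+ 2 / (2 ^+ n * norm2 f ^+ 4).
Definition PfL (f : vec -> C) (L : {set vec * vec}) : C :=
  \sum_(u in L) Pf f u.1 u.2.
End Defs.

(* Main.v *)
Set Warnings "-notation-overridden,-ambiguous-paths".
Require Import Defs.
From HB Require Import structures.
From mathcomp Require Import all_boot all_order all_algebra.
From mathcomp Require Import complex.
From mathcomp Require Import reals.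
From mathcomp Require Import ring.
Set Implicit Arguments. Unset Strict Implicit. Unset Printing Implicit Defensive.
Import Order.TTheory GRing.Theory Num.Theory.
Local Open Scope ring_scope.

Section Work.
Variables (R : realType) (n : nat).
Local Notation C := R[i].
Local Notation V := (vec n).
Implicit Types (f g h : V -> C) (u v w : V * V) (a b x y : V).

Lemma F2_cases (t : 'F_2) : t = 0 \/ t = 1.
Proof.
case: t => [[|[|m]] Hm].
- by left; apply/val_inj.
- by right; apply/val_inj.
- by [].
Qed.

Lemma F2_addxx (t : 'F_2) : t + t = 0.
Proof. by case: (F2_cases t) => ->; apply/val_inj => /=; reflexivity. Qed.

Lemma F2_oppE (t : 'F_2) : - t = t.
Proof. by apply/eqP; rewrite eq_sym -subr_eq0 opprK F2_addxx. Qed.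

Lemma vaddxx (a : V) : a + a = 0.
Proof. by apply/matrixP => i j; rewrite !mxE F2_addxx. Qed.

Lemma vaddK (x a : V) : x + a + a = x.
Proof. by rewrite -addrA vaddxx addr0. Qed.

Definition sg (t : 'F_2) : C := if t == 0 then 1 else -1.

Lemma sgD s t : sg (s + t) = sg s * sg t.
Proof.
have E10 : (1 == 0 :> 'F_2) = false by reflexivity.
case: (F2_cases s) => ->; case: (F2_cases t) => ->;
  rewrite ?addr0 ?add0r ?F2_addxx /sg ?eqxx ?E10 ?mulr1 ?mul1r ?mulrNN ?mulr1 //.
Qed.

Lemma sg0 : sg 0 = 1. Proof. by rewrite /sg eqxx. Qed.
Lemma sg_sq t : sg t * sg t = 1.
Proof. by rewrite -sgD F2_addxx sg0. Qed.
Lemma sg_conj t : (sg t)^* = sg t.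
Proof. by rewrite /sg; case: ifP; rewrite ?rmorphN rmorph1. Qed.
Lemma sg_norm t : `|sg t| = 1.
Proof. by rewrite /sg; case: ifP; rewrite ?normrN normr1. Qed.

Lemma dotC (a b : V) : dot a b = dot b a.
Proof. by rewrite /dot; apply: eq_bigr => i _; rewrite mulrC. Qed.
Lemma dotDr (a x y : V) : dot a (x + y) = dot a x + dot a y.
Proof. by rewrite /dot -big_split; apply: eq_bigr => i _; rewrite !mxE mulrDr. Qed.
Lemma dotDl (a b x : V) : dot (a + b) x = dot a x + dot b x.
Proof. by rewrite dotC dotDr ![dot x _]dotC. Qed.
Lemma dot0r (a : V) : dot a 0 = 0.
Proof. by rewrite /dot big1 // => i _; rewrite mxE mulr0. Qed.
Lemma dot0l (a : V) : dot 0 a = 0.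
Proof. by rewrite dotC dot0r. Qed.

Lemma chrE (b x : V) : chr R b x = sg (dot b x).
Proof. by []. Qed.
Lemma chrDr (b x y : V) : chr R b (x + y) = chr R b x * chr R b y.
Proof. by rewrite !chrE dotDr sgD. Qed.
Lemma chrDl (b b' x : V) : chr R (b + b') x = chr R b x * chr R b' x.
Proof. by rewrite !chrE dotDl sgD. Qed.
Lemma chrC (b x : V) : chr R b x = chr R x b.
Proof. by rewrite !chrE dotC. Qed.
Lemma chr0r (b : V) : chr R b 0 = 1.
Proof. by rewrite chrE dot0r sg0. Qed.
Lemma chr0l (b : V) : chr R 0 b = 1.
Proof. by rewrite chrE dot0l sg0. Qed.
Lemma chr_sq (b x : V) : chr R b x * chr R b x = 1.
Proof. by rewrite chrE sg_sq. Qed.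
Lemma chr_conj (b x : V) : (chr R b x)^* = chr R b x.
Proof. by rewrite chrE sg_conj. Qed.

Definition NN : C := #|{: V}|%:R.

Lemma card_V : #|{: V}| = (2 ^ n)%N.
Proof. by rewrite card_mx card_Fp // mul1n. Qed.

Lemma NN_gt0 : 0 < NN.
Proof. by rewrite /NN ltr0n card_V expn_gt0. Qed.
Lemma NN_neq0 : NN != 0.
Proof. by rewrite gt_eqF // NN_gt0. Qed.
Lemma NNE : NN = 2 ^+ n.
Proof. by rewrite /NN card_V natrX. Qed.

Lemma sum_shift (F : V -> C) (a : V) : \sum_x F (x + a) = \sum_x F x.
Proof. by rewrite [RHS](reindex_inj (addIr a)). Qed.

Lemma sum_chr (b : V) : \sum_x chr R b x = if b == 0 then NN else 0.
Proof.
case: ifP => [/eqP -> | /eqP nb].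
  by rewrite (eq_bigr (fun=> 1)) ?sumr_const // => x _; rewrite chr0l.
have [i bi] : exists i, b 0 i != 0.
  apply/existsP; apply: contraT; rewrite negb_exists => /forallP H.
  by case: nb; apply/matrixP => k j; rewrite ord1 mxE; apply/eqP/negPn/H.
set e : V := delta_mx 0 i.
have ce : chr R b e = -1.
  rewrite chrE /dot (bigD1 i) //= big1 => [|j ji]; last by rewrite !mxE (negbTE ji) andbF mulr0.
  rewrite !mxE !eqxx mulr1 addr0 /sg.
  by case: (F2_cases (b 0 i)) bi => -> //; rewrite eqxx.
have : \sum_x chr R b x = - \sum_x chr R b x.
  rewrite -{1}(sum_shift _ e) -sumrN; apply: eq_bigr => x _.
  by rewrite chrDr ce mulrN1.
move/eqP; rewrite -subr_eq0 opprK -mulr2n -mulr_natr mulf_eq0 pnatr_eq0 orbF.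
by move/eqP.
Qed.


Definition T (u : V * V) (g : V -> C) : V -> C := fun x => g (x + u.1) * chr R u.2 x.
Definition padd (u v : V * V) : V * V := (u.1 + v.1, u.2 + v.2).

Lemma avg_shift (F : V -> C) a : avg (fun x => F (x + a)) = avg F.
Proof. by rewrite /avg sum_shift. Qed.

Lemma avgE (F : V -> C) : avg F = NN^-1 * \sum_x F x.
Proof. by []. Qed.

Lemma avg_ext (F G : V -> C) : (forall x, F x = G x) -> avg F = avg G.
Proof. by move=> H; rewrite /avg; congr (_ * _); apply: eq_bigr => x _. Qed.

Lemma avgZ (c : C) (F : V -> C) : avg (fun x => c * F x) = c * avg F.
Proof. by rewrite /avg -mulr_sumr mulrCA. Qed.

Lemma avg_sum (I : finType) (P : pred I) (F : I -> V -> C) :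
  avg (fun x => \sum_(i | P i) F i x) = \sum_(i | P i) avg (F i).
Proof. by rewrite /avg exchange_big mulr_sumr. Qed.

Lemma avg_conj (F : V -> C) : (avg F)^* = avg (fun x => (F x)^*).
Proof.
rewrite /avg rmorphM rmorph_sum; congr (_ * _).
by rewrite fmorphV /NN rmorph_nat.
Qed.

Lemma inner_ext (f g f' g' : V -> C) : (forall x, f x = f' x) -> (forall x, g x = g' x) ->
  inner f g = inner f' g'.
Proof. by move=> H1 H2; apply: avg_ext => x; rewrite H1 H2. Qed.

Lemma innerZl c f g : inner (fun x => c * f x) g = c * inner f g.
Proof. by rewrite /inner -avgZ; apply: avg_ext => x; rewrite mulrA. Qed.

Lemma innerZr c f g : inner f (fun x => c * g x) = c^* * inner f g.
Proof. by rewrite /inner -avgZ; apply: avg_ext => x; rewrite rmorphM mulrCA. Qed.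

Lemma inner_suml (I : finType) (P : pred I) (F : I -> V -> C) g :
  inner (fun x => \sum_(i | P i) F i x) g = \sum_(i | P i) inner (F i) g.
Proof. by rewrite /inner -avg_sum; apply: avg_ext => x; rewrite mulr_suml. Qed.

Lemma inner_sumr (I : finType) (P : pred I) (F : I -> V -> C) g :
  inner g (fun x => \sum_(i | P i) F i x) = \sum_(i | P i) (inner g (F i)).
Proof.
rewrite /inner -avg_sum; apply: avg_ext => x; rewrite rmorph_sum mulr_sumr.
done.
Qed.

Lemma inner_conj f g : (inner f g)^* = inner g f.
Proof. by rewrite /inner avg_conj; apply: avg_ext => x; rewrite rmorphM /= conjCK mulrC. Qed.

Lemma inner_ge0 f : 0 <= inner f f.
Proof.
rewrite /inner /avg mulr_ge0 ?invr_ge0 ?ler0n //.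
by apply: sumr_ge0 => x _; apply: mul_conjC_ge0.
Qed.

Lemma inner_eq0 f : inner f f = 0 -> forall x, f x = 0.
Proof.
rewrite /inner /avg => H0 x.
have H : \sum_x f x * (f x)^* = 0.
  by move/eqP: H0; rewrite mulf_eq0 invr_eq0 (negbTE NN_neq0) /= => /eqP.
have Hx : f x * (f x)^* = 0.
  exact: (psumr_eq0P (P := predT) (F := fun x => f x * (f x)^*) (fun x _ => mul_conjC_ge0 (f x)) H).
by apply/eqP; rewrite -mul_conjC_eq0 Hx.
Qed.

Lemma fhat_Delta a b g : fhat (Delta a g) b = inner (T (a, b) g) g.
Proof. by apply: avg_ext => x; rewrite /Delta /T /= mulrAC. Qed.

Lemma TT u v g x : T u (T v g) x = chr R v.2 u.1 * T (padd u v) g x.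
Proof.
rewrite /T /padd /= chrDr chrDl -addrA [u.1 + v.1]addrC.
ring.
Qed.

Lemma T0 g x : T (0, 0) g x = g x.
Proof. by rewrite /T /= addr0 chr0l mulr1. Qed.

Lemma T_adj u g h : inner (T u g) h = chr R u.2 u.1 * inner g (T u h).
Proof.
rewrite /inner /T -avgZ -(avg_shift _ u.1); apply: avg_ext => x.
rewrite vaddK chrDr rmorphM /= chr_conj.
ring.
Qed.

Lemma TZ u c g x : T u (fun y => c * g y) x = c * T u g x.
Proof. by rewrite /T mulrA. Qed.

Lemma TD u g h x : T u (fun y => g y + h y) x = T u g x + T u h x.
Proof. by rewrite /T mulrDl. Qed.

Lemma T_sum u (I : finType) (P : pred I) (F : I -> V -> C) x :
  T u (fun y => \sum_(i | P i) F i y) x = \sum_(i | P i) T u (F i) x.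
Proof. by rewrite /T mulr_suml. Qed.

Lemma T_ext u g g' x : (forall y, g y = g' y) -> T u g x = T u g' x.
Proof. by move=> H; rewrite /T H. Qed.

Definition eps (u : V * V) : C := if dot u.1 u.2 == 0 then 1 else 'i.

Lemma chr_self u : chr R u.2 u.1 = sg (dot u.1 u.2).
Proof. by rewrite chrE dotC. Qed.

Lemma eps_sq u : eps u * eps u * chr R u.2 u.1 = 1.
Proof.
rewrite chr_self /eps /sg; case: ifP => _; first by rewrite !mulr1.
by rewrite -expr2 sqrCi mulrNN mulr1.
Qed.

Lemma eps_norm u : `|eps u| = 1.
Proof. by rewrite /eps; case: ifP => _; rewrite ?normr1 ?normCi. Qed.

Lemma eps_conj u : (eps u)^* = eps u * chr R u.2 u.1.
Proof.
rewrite chr_self /eps /sg; case: ifP => _; first by rewrite rmorph1 mulr1.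
by rewrite conjCi mulrN1.
Qed.

Definition Vop u g : V -> C := fun x => eps u * T u g x.

Lemma Vop_inv u g x : Vop u (Vop u g) x = g x.
Proof.
rewrite /Vop TZ TT.
rewrite /padd vaddxx vaddxx T0 mulrA mulrA eps_sq mul1r.
done.
Qed.

Lemma chr_sympl u v : chr R v.2 u.1 * chr R u.2 v.1 = sg (sympl u v).
Proof. by rewrite !chrE /sympl -sgD dotC. Qed.

Lemma padd_C u v : padd u v = padd v u.
Proof. by rewrite /padd addrC [u.2 + _]addrC. Qed.

Lemma TT_swap u v g x : T u (T v g) x = sg (sympl u v) * T v (T u g) x.
Proof.
rewrite !TT padd_C -chr_sympl mulrA -[chr R v.2 u.1 * _ * _]mulrA chr_sq mulr1.
done.
Qed.

Lemma Vop_comm u v g x : sympl u v = 0 -> Vop u (Vop v g) x = Vop v (Vop u g) x.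
Proof.
move=> H; rewrite /Vop !TZ TT_swap H sg0 mul1r; ring.
Qed.

Lemma Vop_adj u g h : inner (Vop u g) h = inner g (Vop u h).
Proof. by rewrite /Vop innerZl innerZr T_adj eps_conj mulrA. Qed.

Lemma VopZ u c g x : Vop u (fun y => c * g y) x = c * Vop u g x.
Proof. by rewrite /Vop TZ; ring. Qed.

Lemma VopD u g h x : Vop u (fun y => g y + h y) x = Vop u g x + Vop u h x.
Proof. by rewrite /Vop TD mulrDr. Qed.

Lemma Vop_sum u (I : finType) (P : pred I) (F : I -> V -> C) x :
  Vop u (fun y => \sum_(i | P i) F i y) x = \sum_(i | P i) Vop u (F i) x.
Proof. by rewrite /Vop T_sum mulr_sumr. Qed.

Lemma Vop_ext u g g' x : (forall y, g y = g' y) -> Vop u g x = Vop u g' x.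
Proof. by move=> H; rewrite /Vop (T_ext _ _ H). Qed.

Lemma sum_chr2 x y : \sum_b chr R b x * chr R b y = if x == y then NN else 0.
Proof.
under eq_bigr => b _ do rewrite -chrDr chrC.
rewrite sum_chr; congr (if _ then _ else _).
apply/eqP/eqP => [H|->]; last exact: vaddxx.
by rewrite -(vaddK x y) H add0r.
Qed.

Lemma parseval g : \sum_b fhat g b * (fhat g b)^* = avg (fun x => g x * (g x)^*).
Proof.
have E b : fhat g b * (fhat g b)^* =
    NN^-1 * NN^-1 * \sum_x \sum_y (g x * (g y)^* * (chr R b x * chr R b y)).
  rewrite /fhat avg_conj !avgE mulrACA big_distrlr /=; congr (_ * _).
  apply: eq_bigr => x _; apply: eq_bigr => y _.
  by rewrite rmorphM /= chr_conj; ring.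
under eq_bigr => b _ do rewrite E.
rewrite -mulr_sumr exchange_big /=.
under eq_bigr => x _ do rewrite exchange_big /=.
under eq_bigr => x _ do under eq_bigr => y _ do rewrite -mulr_sumr sum_chr2.
rewrite avgE -mulrA; congr (_ * _).
rewrite mulr_sumr; apply: eq_bigr => x _.
rewrite (bigD1 x) //= eqxx big1 => [|y /negbTE]; last by rewrite eq_sym => ->; rewrite mulr0.
by rewrite addr0 mulrCA mulVf ?NN_neq0 // mulr1.
Qed.

Lemma avg_swap (F : V -> V -> C) :
  avg (fun x => avg (fun y => F x y)) = avg (fun y => avg (fun x => F x y)).
Proof.
rewrite !avgE; congr (_ * _).
rewrite (eq_bigr (fun x => NN^-1 * \sum_y F x y)) // -mulr_sumr exchange_big /=.
by rewrite mulr_sumr.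
Qed.

Lemma avg_shiftl (F : V -> C) a : avg (fun x => F (a + x)) = avg F.
Proof. by rewrite -(avg_shift F a); apply: avg_ext => x; rewrite addrC. Qed.

Lemma fhat_conj g b : (fhat g b)^* = avg (fun x => (g x)^* * chr R b x).
Proof. by rewrite /fhat avg_conj; apply: avg_ext => x; rewrite rmorphM /= chr_conj. Qed.

Lemma U2 h : avg (fun x => avg (fun a => avg (fun b => Delta a (Delta b h) x))) =
  \sum_c (fhat h c * (fhat h c)^*) ^+ 2.
Proof.
pose k a := avg (fun x => h (x + a) * (h x)^*).
have S1 a : avg (fun b => avg (fun x => Delta a (Delta b h) x)) = k a * (k a)^*.
  rewrite avg_swap.
  transitivity (avg (fun x => k a * ((h (x + a))^* * h x))).
    apply: avg_ext => x.
    rewrite (avg_ext (G := fun b => (h (x + a))^* * h x *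
        ((fun y => h (y + a) * (h y)^*) (b + x)))); last first.
      move=> b; rewrite /Delta /= rmorphM /= conjCK [b + x]addrC (addrAC x b a).
      ring.
    by rewrite avgZ (avg_shift (fun y => h (y + a) * (h y)^*)) mulrC.
  rewrite avgZ avg_conj; congr (_ * _); apply: avg_ext => x.
  by rewrite rmorphM /= conjCK mulrC.
have S3 c : fhat k c = fhat h c * (fhat h c)^*.
  rewrite {1}/fhat.
  rewrite (avg_ext (G := fun a => avg (fun x => h (x + a) * (h x)^* * chr R c a))); last first.
    by move=> a; rewrite /k mulrC -avgZ; apply: avg_ext => x; ring.
  rewrite avg_swap.
  rewrite (avg_ext (G := fun x => fhat h c * ((h x)^* * chr R c x))); last first.
    move=> x; rewrite /fhat mulrC -avgZ -(avg_shiftl _ x); apply: avg_ext => a.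
    rewrite addrA vaddxx add0r chrDr; ring.
  by rewrite avgZ fhat_conj.
transitivity (avg (fun a => k a * (k a)^*)).
  rewrite (avg_swap (fun x a => avg (fun b => Delta a (Delta b h) x))).
  apply: avg_ext => a; rewrite -S1.
  exact: (avg_swap (fun x b => Delta a (Delta b h) x)).
rewrite -parseval; apply: eq_bigr => c _.
by rewrite S3 (geC0_conj (mul_conjC_ge0 _)) expr2.
Qed.

Lemma symplC u v : sympl u v = sympl v u.
Proof. by rewrite /sympl addrC (dotC u.1) (dotC u.2). Qed.

Lemma symplDl u v w : sympl (padd u v) w = sympl u w + sympl v w.
Proof. by rewrite /sympl /padd /= !dotDl addrACA. Qed.

Lemma symplDr u v w : sympl w (padd u v) = sympl w u + sympl w v.
Proof. by rewrite symplC symplDl !(symplC w). Qed.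

Lemma sympl_self u : sympl u u = 0.
Proof. by rewrite /sympl dotC F2_addxx. Qed.

Lemma padd_K u v : padd (padd u v) v = u.
Proof. by rewrite /padd /= !vaddK; case: u. Qed.

Lemma paddA u v w : padd (padd u v) w = padd u (padd v w).
Proof. by rewrite /padd /= !addrA. Qed.

Lemma padd_xx u : padd u u = (0, 0).
Proof. by rewrite /padd !vaddxx. Qed.

Lemma padd0 u : padd u (0, 0) = u.
Proof. by rewrite /padd /= !addr0; case: u. Qed.

Section Lag.
Variable L : {set V * V}.
Hypothesis hL : lagrangian L.

Lemma L0 : (0, 0) \in L.
Proof. by case: hL => [[]]. Qed.

Lemma LD u v : u \in L -> v \in L -> padd u v \in L.
Proof. by case: hL => [[_ H] _] /H; apply. Qed.

Lemma Liso u v : u \in L -> v \in L -> sympl u v = 0.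
Proof. by case: hL => _ [H _]; apply: H. Qed.

Lemma L_notin u : u \notin L -> exists2 v, v \in L & sympl u v != 0.
Proof.
move=> uL.
have [/existsP[v /andP[vL nz]] | /existsPn H] := boolP [exists v, (v \in L) && (sympl u v != 0)].
  by exists v.
have Hu v : v \in L -> sympl u v = 0.
  by move=> vL; move: (H v); rewrite vL /= negbK => /eqP.
pose M := [set w | (w \in L) || (padd w u \in L)].
have MP w : (w \in M) = (w \in L) || (padd w u \in L) by rewrite inE.
have Hw w z : w \in M -> z \in L -> sympl w z = 0.
  rewrite MP => /orP[wL zL|wuL zL]; first exact: Liso.
  have := Liso wuL zL; rewrite symplDl (Hu _ zL) addr0 //.
have Hwu w : w \in M -> sympl w u = 0.
  rewrite MP => /orP[wL|wuL]; first by rewrite symplC Hu.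
  by have := Hu _ wuL; rewrite symplC symplDl sympl_self addr0.
have sM : subspace M.
  split; first by rewrite MP L0.
  move=> v w; rewrite !MP => /orP[vL|vuL] /orP[wL|wuL].
  - by rewrite (LD vL wL).
  - by have := LD vL wuL; rewrite -paddA => ->; rewrite orbT.
  - have := LD vuL wL; rewrite paddA (padd_C u w) -paddA => ->; by rewrite orbT.
  - have := LD vuL wuL.
    have -> : padd (padd v u) (padd w u) = padd v w.
      by rewrite /padd /= (addrACA v.1 u.1) (addrACA v.2 u.2) !vaddxx !addr0.
    by rewrite /padd /= => ->.
have iM : isotropic M.
  move=> v w vM; rewrite MP => /orP[wL|wuL]; first exact: Hw.
  have := Hw _ _ vM wuL; rewrite symplDr (Hwu _ vM) addr0 //.
have LM : L \subset M by apply/subsetP => w wL; rewrite MP wL.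
case: hL => _ [_ Hmax].
have eM := Hmax M sM iM LM.
have H0 : padd (0, 0) u \in L by rewrite -eM MP padd_K L0 orbT.
by move: H0; rewrite /padd /= !add0r -surjective_pairing (negbTE uL).
Qed.


Lemma Vop_opp u g x : Vop u (fun y => - g y) x = - Vop u g x.
Proof.
rewrite (Vop_ext _ (g' := fun y => -1 * g y)) => [|y]; last by rewrite mulN1r.
by rewrite VopZ mulN1r.
Qed.

Lemma eigen_exists (us : seq (V * V)) :
  all (mem L) us -> forall g, (exists x, g x != 0) ->
  exists h, (exists x, h x != 0) /\ forall u, u \in us ->
    (forall x, Vop u h x = h x) \/ (forall x, Vop u h x = - h x).
Proof.
elim: us => [|u us IH] /=; first by move=> _ g hg; exists g; split.
move=> /andP[uL usL] g hg.
have [h [hnz hh]] := IH usL g hg.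
pose h' := fun x => h x + Vop u h x.
have [/existsP[x0 hx0] | /existsPn H0] := boolP [exists x, h' x != 0].
  exists h'; split; first by exists x0.
  move=> w; rewrite inE => /orP[/eqP -> | wus].
    by left => x; rewrite /h' VopD Vop_inv addrC.
  have wL : w \in L by move/allP: usL => /(_ w wus).
  case: (hh w wus) => Hw; [left|right] => x; rewrite /h' VopD Vop_comm ?(Liso wL uL) //.
    by rewrite Hw (Vop_ext _ (g' := h)).
  by rewrite Hw (Vop_ext _ (g' := fun y => - h y)) // Vop_opp opprD.
exists h; split => // w; rewrite inE => /orP[/eqP -> | wus]; last exact: hh.
right => x; move: (H0 x); rewrite negbK /h' addrC addr_eq0 => /eqP.
done.
Qed.

Section Rep.
Variables (phi0 : V -> C) (x0 : V).
Hypothesis phi0x0 : phi0 x0 != 0.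
Hypothesis phi0_eig : forall u, u \in L ->
  (forall x, Vop u phi0 x = phi0 x) \/ (forall x, Vop u phi0 x = - phi0 x).

Definition s u : C := if [forall x, Vop u phi0 x == phi0 x] then 1 else -1.

Lemma s_sq u : s u * s u = 1.
Proof. by rewrite /s; case: ifP; rewrite ?mulr1 ?mulrNN ?mulr1. Qed.
Lemma s_conj u : (s u)^* = s u.
Proof. by rewrite /s; case: ifP; rewrite ?rmorphN rmorph1. Qed.
Lemma s_norm u : `|s u| = 1.
Proof. by rewrite /s; case: ifP; rewrite ?normrN normr1. Qed.

Lemma Vop_phi0 u x : u \in L -> Vop u phi0 x = s u * phi0 x.
Proof.
move=> uL; rewrite /s; case: ifP => [/forallP H|/negbT H].
  by rewrite mul1r; apply/eqP.
case: (phi0_eig uL) => E; last by rewrite E mulN1r.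
by exfalso; move/forallP: H; apply => y; rewrite E.
Qed.

Definition Rop u g : V -> C := fun x => s u * Vop u g x.

Lemma Rop_T u g x : Rop u g x = s u * eps u * T u g x.
Proof. by rewrite /Rop /Vop mulrA. Qed.

Lemma Rop_ext u g g' x : (forall y, g y = g' y) -> Rop u g x = Rop u g' x.
Proof. by move=> H; rewrite /Rop (Vop_ext _ _ H). Qed.

Lemma RopZ u c g x : Rop u (fun y => c * g y) x = c * Rop u g x.
Proof. by rewrite /Rop VopZ mulrCA. Qed.

Lemma Rop_sum u (I : finType) (P : pred I) (F : I -> V -> C) x :
  Rop u (fun y => \sum_(i | P i) F i y) x = \sum_(i | P i) Rop u (F i) x.
Proof. by rewrite /Rop Vop_sum mulr_sumr. Qed.

Lemma Rop_phi0 u x : u \in L -> Rop u phi0 x = phi0 x.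
Proof. by move=> uL; rewrite /Rop Vop_phi0 // mulrA s_sq mul1r. Qed.

Lemma Rop_inv u g x : Rop u (Rop u g) x = g x.
Proof. by rewrite /Rop VopZ mulrA s_sq mul1r Vop_inv. Qed.

Lemma Rop_adj u g h : inner (Rop u g) h = inner g (Rop u h).
Proof. by rewrite /Rop innerZl innerZr s_conj Vop_adj. Qed.

Definition kappa u v : C := s u * eps u * (s v * eps v) * chr R v.2 u.1.

Lemma RR_gen u v g x : Rop u (Rop v g) x = kappa u v * T (padd u v) g x.
Proof.
rewrite Rop_T (T_ext _ _ (fun y => Rop_T v g y)) TZ TT /kappa; ring.
Qed.

Lemma RR u v g x : u \in L -> v \in L -> Rop u (Rop v g) x = Rop (padd u v) g x.
Proof.
move=> uL vL; rewrite RR_gen Rop_T; congr (_ * _).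
have uvL := LD uL vL.
have E1 : Rop u (Rop v phi0) x0 = phi0 x0.
  by rewrite (Rop_ext _ (g' := phi0)) ?Rop_phi0 // => y; rewrite Rop_phi0.
have E2 := Rop_phi0 x0 uvL.
rewrite RR_gen in E1; rewrite Rop_T in E2.
have nz : T (padd u v) phi0 x0 != 0.
  by apply: contraNneq phi0x0 => H; rewrite -E2 H mulr0.
by apply: (mulIf nz); rewrite E1 E2.
Qed.

Lemma Rop0 g x : Rop (0, 0) g x = g x.
Proof.
have E := RR g x L0 L0; rewrite padd_xx in E.
by rewrite -E Rop_inv.
Qed.

Lemma T_Rop u v g x : T u (Rop v g) x = sg (sympl u v) * Rop v (T u g) x.
Proof.
rewrite (T_ext _ _ (fun y => Rop_T v g y)) TZ TT_swap Rop_T; ring.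
Qed.

Lemma sum_L_shift (F : V * V -> C) v : v \in L ->
  \sum_(u in L) F u = \sum_(u in L) F (padd v u).
Proof.
move=> vL.
have inj : injective (padd v) by move=> a b H; rewrite -(padd_K a v) -(padd_K b v) !(padd_C _ v) H.
rewrite (reindex_inj inj); apply: eq_bigl => u /=.
apply/idP/idP => H; last exact: LD.
by rewrite -(padd_K u v) padd_C; apply: LD => //; rewrite padd_C.
Qed.

Definition Q w g : V -> C := fun x => \sum_(u in L) sg (sympl u w) * Rop u g x.

Lemma Rop_Q v w g x : v \in L -> Rop v (Q w g) x = sg (sympl v w) * Q w g x.
Proof.
move=> vL; rewrite /Q Rop_sum.
under eq_bigr => u uL do rewrite RopZ (RR _ _ vL uL).
rewrite (sum_L_shift _ vL) mulr_sumr; apply: eq_bigr => u uL.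
rewrite -paddA padd_xx (padd_C (0, 0)) padd0 symplDl sgD; ring.
Qed.

Lemma Q_adj w g h : inner (Q w g) h = inner g (Q w h).
Proof.
rewrite /Q inner_suml inner_sumr; apply: eq_bigr => u _.
by rewrite innerZl innerZr sg_conj Rop_adj.
Qed.

Lemma QQ w g x : Q w (Q w g) x = #|L|%:R * Q w g x.
Proof.
rewrite {1}/Q.
under eq_bigr => u uL do rewrite Rop_Q // mulrA sg_sq mul1r.
by rewrite sumr_const mulr_natl.
Qed.


Lemma sum_sympl u : \sum_w sg (sympl u w) = if u == (0, 0) then NN * NN else 0.
Proof.
rewrite (eq_bigr (fun w => chr R u.2 w.1 * chr R u.1 w.2)); last first.
  by move=> w _; rewrite /sympl sgD mulrC.
rewrite -(pair_bigA _ (fun a b => chr R u.2 a * chr R u.1 b)) /=.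
under eq_bigr => a _ do rewrite -mulr_sumr.
rewrite -mulr_suml !sum_chr.
case: u => a b /=; rewrite xpair_eqE.
by case: (a == 0); case: (b == 0); rewrite ?mulr0 ?mul0r.
Qed.

Lemma padd_eq0 u v : (padd u v == (0, 0)) = (u == v).
Proof.
apply/eqP/eqP => [H|->]; last exact: padd_xx.
by rewrite -(padd_K u v) H padd_C padd0.
Qed.

Variable f : V -> C.

Definition cc u := inner (Rop u f) f.
Definition q w := inner (Q w f) f.

Lemma q_expand w : q w = \sum_(u in L) sg (sympl u w) * cc u.
Proof. by rewrite /q /Q inner_suml; apply: eq_bigr => u _; rewrite innerZl. Qed.

Lemma cc0 : cc (0, 0) = inner f f.
Proof. by rewrite /cc; apply: inner_ext => x //; rewrite Rop0. Qed.

Lemma sum_q : \sum_w q w = NN * NN * inner f f.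
Proof.
under eq_bigr => w _ do rewrite q_expand.
rewrite exchange_big /=.
under eq_bigr => u _ do rewrite -mulr_suml sum_sympl.
rewrite (bigD1 (0, 0)) ?L0 //= eqxx big1 => [|u /andP[_ /negbTE ->]]; last by rewrite mul0r.
by rewrite addr0 cc0 mulrC.
Qed.

Lemma sum_qq : \sum_w q w * (q w)^* = NN * NN * \sum_(u in L) cc u * (cc u)^*.
Proof.
have E w : q w * (q w)^* = \sum_(u in L) \sum_(v in L)
    (sg (sympl (padd u v) w) * (cc u * (cc v)^*)).
  rewrite q_expand rmorph_sum big_distrlr /=; apply: eq_bigr => u _.
  apply: eq_bigr => v _; rewrite rmorphM /= sg_conj symplDl sgD; ring.
under eq_bigr => w _ do rewrite E.
rewrite exchange_big /= mulr_sumr; apply: eq_bigr => u uL.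
rewrite exchange_big /=.
under eq_bigr => v _ do rewrite -mulr_suml sum_sympl padd_eq0.
rewrite (bigD1 u) //= eqxx big1 ?addr0; first by ring.
by move=> v /andP[_ ]; rewrite eq_sym => /negbTE ->; rewrite mul0r.
Qed.

Lemma cardL_gt0 : (0 < #|L|)%N.
Proof. by apply/card_gt0P; exists (0, 0); exact: L0. Qed.

Lemma q_mulL w : #|L|%:R * q w = inner (Q w f) (Q w f).
Proof.
rewrite -Q_adj /q -innerZl; apply: inner_ext => x //.
by rewrite QQ.
Qed.

Lemma q_ge0 w : 0 <= q w.
Proof.
have H := q_mulL w.
have Lpos : 0 < (#|L|%:R : C) by rewrite ltr0n cardL_gt0.
have -> : q w = (#|L|%:R)^-1 * inner (Q w f) (Q w f).
  by rewrite -H mulrA mulVf ?mul1r // gt_eqF.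
by apply: mulr_ge0; [rewrite invr_ge0 ltW | apply: inner_ge0].
Qed.

Lemma cc_norm u : `|cc u| = `|fhat (Delta u.1 f) u.2|.
Proof.
rewrite fhat_Delta -surjective_pairing /cc.
rewrite (inner_ext (f' := fun x => s u * eps u * T u f x) (g' := f)) => //; last first.
  by move=> x; rewrite Rop_T.
by rewrite innerZl !normrM s_norm eps_norm !mul1r.
Qed.


Section Phi.
Variables (w0 : V * V) (phi : V -> C).
Hypothesis phi_norm : inner phi phi = 1.
Hypothesis phi_eig : forall v x, v \in L -> Rop v phi x = sg (sympl v w0) * phi x.

Lemma LagOf_phi : LagOf phi L.
Proof.
move=> a b; rewrite fhat_Delta; set u := (a, b).
case: ifP => uL.
  have E : inner (Rop u phi) phi = sg (sympl u w0).
    rewrite (inner_ext (f' := fun x => sg (sympl u w0) * phi x) (g' := phi)) //; last first.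
      by move=> x; rewrite phi_eig.
    by rewrite innerZl phi_norm mulr1.
  rewrite (inner_ext (f' := fun x => s u * eps u * T u phi x) (g' := phi)) in E => //; last first.
    by move=> x; rewrite Rop_T.
  by move: (congr1 (@Num.norm _ C) E); rewrite innerZl !normrM s_norm eps_norm sg_norm !mul1r.
have [v vL nz] := L_notin (negbT uL).
set sig := sg (sympl v w0).
set X := inner (T u phi) phi.
have E1 : inner (T u (Rop v phi)) phi = sig * X.
  rewrite (inner_ext (f' := fun x => sig * T u phi x) (g' := phi)) //; last first.
    by move=> x; rewrite (T_ext _ _ (fun y => phi_eig y vL)) TZ.
  by rewrite innerZl.
have E2 : inner (T u (Rop v phi)) phi = - (sig * X).
  rewrite (inner_ext (f' := fun x => -1 * Rop v (T u phi) x) (g' := phi)) //; last first.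
    move=> x; rewrite T_Rop /sg (negbTE nz) //.
  rewrite innerZl Rop_adj mulN1r.
  rewrite (inner_ext (f' := T u phi) (g' := fun x => sig * phi x)) //; last first.
    by move=> x; rewrite phi_eig.
  by rewrite innerZr sg_conj.
have : sig * X *+ 2 = 0 by rewrite mulr2n -{1}E1 E2 addNr.
move/eqP; rewrite -mulr_natr mulf_eq0 pnatr_eq0 orbF mulf_eq0 => /orP[|/eqP ->].
  by rewrite /sig /sg; case: ifP => _; rewrite ?oppr_eq0 oner_eq0.
by rewrite normr0.
Qed.

Lemma card_L : #|L|%:R = NN.
Proof.
have H1 : \sum_a \sum_b `|fhat (Delta a phi) b| ^+ 2 = #|L|%:R.
  under eq_bigr => a _ do under eq_bigr => b _ do rewrite LagOf_phi.
  rewrite (pair_bigA _ (fun a b => (if (a, b) \in L then 1 else 0 : C) ^+ 2)) /=.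
  rewrite -sumr_const [RHS]big_mkcond /=; apply: eq_bigr => p _.
  by rewrite -surjective_pairing; case: ifP; rewrite ?expr1n ?expr0n.
rewrite -H1.
under eq_bigr => a _ do under eq_bigr => b _ do rewrite normCK.
under eq_bigr => a _ do rewrite parseval.
transitivity (\sum_a avg (fun x => (phi (x + a) * (phi (x + a))^*) * (phi x * (phi x)^*))).
  apply: eq_bigr => a _; apply: avg_ext => x.
  by rewrite /Delta rmorphM /= conjCK; ring.
rewrite -avg_sum.
rewrite (avg_ext (G := fun x => (phi x * (phi x)^*) * \sum_a (phi a * (phi a)^*))); last first.
  move=> x; rewrite mulr_sumr.
  rewrite -[RHS](sum_shift (fun a => phi x * (phi x)^* * (phi a * (phi a)^*)) x) /=.
  by apply: eq_bigr => a _; rewrite [a + x]addrC mulrC.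
rewrite (avg_ext (G := fun x => (NN * inner phi phi) * (phi x * (phi x)^*))); last first.
  by move=> x; rewrite mulrC /inner avgE; field; exact: NN_neq0.
by rewrite avgZ -/(inner phi phi) phi_norm !mulr1.
Qed.

Lemma sum_ind : \sum_a \sum_b (if (a, b) \in L then 1 else 0 : C) = #|L|%:R.
Proof.
rewrite (pair_bigA _ (fun a b => (if (a, b) \in L then 1 else 0 : C))) /=.
rewrite -sumr_const [RHS]big_mkcond /=; apply: eq_bigr => p _.
by rewrite -surjective_pairing.
Qed.

Lemma U3_phi : U3 phi = 1.
Proof.
rewrite /U3.
set F := fun x a b c => Delta a (Delta b (Delta c phi)) x.
transitivity (8.-root (avg (fun x => avg (fun a => avg (fun c => avg (fun b => F x a b c)))))).
  congr (_ _); apply: avg_ext => x; apply: avg_ext => a.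
  exact: (avg_swap (fun b c => F x a b c)).
transitivity (8.-root (avg (fun x => avg (fun c => avg (fun a => avg (fun b => F x a b c)))))).
  congr (_ _); apply: avg_ext => x.
  exact: (avg_swap (fun a c => avg (fun b => F x a b c))).
rewrite (avg_swap (fun x c => avg (fun a => avg (fun b => F x a b c)))).
rewrite (avg_ext (G := fun c => \sum_b (if (c, b) \in L then 1 else 0))); last first.
  move=> c; rewrite /F U2; apply: eq_bigr => b _.
  by rewrite -normCK LagOf_phi; case: ifP; rewrite ?expr1n ?expr0n.
by rewrite avgE sum_ind card_L mulVf ?NN_neq0 // rootC1.
Qed.

End Phi.

Lemma main_bound (hf : exists x, f x != 0) :
  exists phi : V -> C,
    [/\ stabilizer_state phi, LagOf phi L &
        PfL f L <= (`|inner f phi| / norm2 f) ^+ 2].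
Proof.
set I := inner f f.
have I_gt0 : 0 < I.
  rewrite lt_def inner_ge0 andbT; apply/eqP => H0.
  by case: hf => x; rewrite (inner_eq0 H0) eqxx.
have I_neq0 : I != 0 by rewrite gt_eqF.
have qreal : {in predT, forall w, q w \is Num.real} by move=> w _; apply/ger0_real/q_ge0.
case: (real_arg_maxP (i0 := (0, 0)) (P := predT) (F := q) isT qreal) => w _ Hmax.
set qs := q w.
have Hmax' j : q j <= qs by apply: Hmax.
have cardVV : #|{: V * V}|%:R = NN * NN :> C by rewrite card_prod natrM.
have qs_ge : I <= qs.
  have : NN * NN * I <= NN * NN * qs.
    have Sqs : \sum_(j : V * V) qs = NN * NN * qs by rewrite sumr_const -cardVV mulr_natl.
    by rewrite -sum_q -Sqs; apply: ler_sum => j _; exact: Hmax'.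
  by rewrite ler_pM2l // mulr_gt0 // NN_gt0.
have qs_gt0 : 0 < qs by apply: lt_le_trans qs_ge.
set G := inner (Q w f) (Q w f).
have GE0 : G = #|L|%:R * qs by rewrite /G -q_mulL.
have G_gt0 : 0 < G by rewrite GE0 mulr_gt0 // ltr0n cardL_gt0.
set c := (sqrtC G)^-1.
have c_gt0 : 0 < c by rewrite invr_gt0 sqrtC_gt0.
have c_conj : c^* = c by rewrite geC0_conj // ltW.
have c_sq : c * c * G = 1.
  by rewrite /c -expr2 exprVn sqrtCK mulVf // gt_eqF.
pose phi := fun x => c * Q w f x.
have phi_norm : inner phi phi = 1 by rewrite innerZl innerZr c_conj -/G mulrA c_sq.
have phi_eig v x : v \in L -> Rop v phi x = sg (sympl v w) * phi x.
  by move=> vL; rewrite RopZ Rop_Q // mulrCA.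
have cL := card_L phi_norm phi_eig.
have GE : G = NN * qs by rewrite GE0 cL.
exists phi; split.
- split; first by rewrite /norm2 phi_norm sqrtC1.
  exact: (U3_phi phi_norm phi_eig).
- exact: (LagOf_phi phi_norm phi_eig).
have n2 : norm2 f ^+ 2 = I by rewrite /norm2 sqrtCK.
have n4 : norm2 f ^+ 4 = I ^+ 2 by rewrite -n2 -exprM.
have LHS : PfL f L = (\sum_w q w * q w) / (NN * NN * NN * (I * I)).
  rewrite /PfL /Pf -mulr_suml -NNE n4.
  rewrite (eq_bigr (fun u => cc u * (cc u)^*)); last by move=> u _; rewrite -cc_norm normCK.
  have : \sum_w q w * q w = NN * NN * \sum_(u in L) cc u * (cc u)^*.
    by rewrite -sum_qq; apply: eq_bigr => j _; rewrite geC0_conj // q_ge0.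
  move=> ->; field.
  by rewrite I_neq0 NN_neq0.
have ifp : inner f phi = c * qs.
  by rewrite innerZr c_conj -Q_adj.
have RHS : (`|inner f phi| / norm2 f) ^+ 2 = qs / (NN * I).
  rewrite expr_div_n n2 ifp ger0_norm; last by apply: mulr_ge0; apply: ltW.
  have cc2 : c * c = G^-1.
    by rewrite -[c * c]mulr1 -(mulfV (negbT (gt_eqF G_gt0))) mulrA c_sq mul1r.
  rewrite exprMn expr2 cc2 GE; field.
  by rewrite I_neq0 NN_neq0 (gt_eqF qs_gt0).
rewrite LHS RHS.
have X : \sum_w q w * q w <= qs * (NN * NN * I).
  rewrite -sum_q mulr_sumr; apply: ler_sum => j _.
  by rewrite mulrC ler_wpM2r // q_ge0.
apply: le_trans (ler_wpM2r _ X) _.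
  have NNp := NN_gt0.
  by rewrite invr_ge0 ltW // (mulr_gt0 (mulr_gt0 (mulr_gt0 NNp NNp) NNp) (mulr_gt0 I_gt0 I_gt0)).
have -> : qs * (NN * NN * I) / (NN * NN * NN * (I * I)) = qs / (NN * I).
  by field; rewrite I_neq0 NN_neq0.
exact: lexx.
Qed.

End Rep.
End Lag. End Work.

Unset Implicit Arguments.
Set Strict Implicit.

Theorem lemma2p18 (R : realType) (n : nat) (f : vec n -> R[i])
  (hf : exists x, f x != 0) (L : {set vec n * vec n}) (hL : lagrangian L) :
  exists phi : vec n -> R[i],
    [/\ stabilizer_state phi, LagOf phi L &
        PfL f L <= (`|inner f phi| / norm2 f) ^+ 2].
Proof.
have Hall : all (mem L) (enum L) by apply/allP => u; rewrite mem_enum.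
have [phi0 [[x0 hx0] heig]] := @eigen_exists R n L hL (enum L) Hall f hf.
have heig' : forall u, u \in L ->
    (forall x, Vop u phi0 x = phi0 x) \/ (forall x, Vop u phi0 x = - phi0 x).
  by move=> u uL; apply: heig; rewrite mem_enum.
exact: (@main_bound R n L hL phi0 x0 hx0 heig' f hf).
Qed.
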